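(* There is an absolute constant $C$ such that for every finite graph $G$, \[\mathrm{rw}(G)\le 3\,\mathrm{fw}_\infty(G)+1\le C\cdot 2^{\mathrm{rw}(G)}+C.\] In particular, a class $\mathcal C$ of graphs has bounded rank-width if and only if $\sup_{G\in\mathcal C}\mathrm{fw}_\infty(G)<\infty$.
   Context: Graphs are finite, simple, undirected. For a bipartition $V(G)=A\uplus B$, the cut-rank $\mathrm{rk}_G(A,B)$ is the rank over the two-element field of the $A\times B$ $0/1$ matrix whose $(a,b)$ entry is $1$ iff $ab\in E(G)$. The rank-width $\mathrm{rw}(G)$ is the least $k$ such that there is a tree whose inner nodes have degree at most $3$ and whose leaves are the vertices of $G$ such that for every tree edge $e$, the bipartition of $V(G)$ into leaves on the two sides of $e$ has cut-rank at most $k$ (graphs with at most one vertex have rank-width $0$). Flipping sets $X,Y$ inverts adjacency of all pairs of distinct $x\in X,y\in Y$; a $k$-flip of $G$ is obtained by choosing a partition $\mathcal P$ of $V(G)$ with at most $k$ parts and flipping some pairs of (possibly equal) parts. Flipper game of radius $\infty$ and width $k$: $G_0=G$, runner chooses $v_0$; in round $i\ge1$ the flipper announces a $k$-flip $G_i$ of $G$, and the runner moves from $v_{i-1}$ to any vertex $v_i$ in the same connected component of $G_{i-1}$; the flipper wins if $v_i$ is isolated in $G_i$. $\mathrm{fw}_\infty(G)$ is the least $k$ for which the flipper has a winning strategy. *)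

(* Defs.v *)
From HB Require Import structures.
From mathcomp Require Import all_boot all_algebra.
Set Implicit Arguments. Unset Strict Implicit. Unset Printing Implicit Defensive.
Import GRing.Theory.

Record sgraph := SGraph {
  vert : finType;
  adj : rel vert;
  adj_sym : symmetric adj;
  adj_irr : irreflexive adj }.

Section Defs.
Variable G : sgraph.
Local Notation V := (vert G).
Local Notation E := (@adj G).

Definition cut_matrix (A : {set V}) : 'M['F_2]_(#|A|, #|~: A|) :=
  \matrix_(i, j) (if E (enum_val i) (enum_val j) then 1%R else 0%R).

Definition cut_rank (A : {set V}) : nat := \rank (cut_matrix A).

Definition del_edge (N : finType) (t : rel N) (u v : N) : rel N :=
  fun a b => t a b && ~~ (((a == u) && (b == v)) || ((a == v) && (b == u))).

Definition is_tree (N : finType) (t : rel N) : Prop :=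
  symmetric t /\ irreflexive t /\
  (forall a b, connect t a b) /\
  (forall u v, t u v -> ~~ connect (del_edge t u v) u v).

Definition tdeg (N : finType) (t : rel N) (a : N) : nat := #|[pred b | t a b]|.

Definition rank_decomp (k : nat) : Prop :=
  exists (N : finType) (t : rel N) (L : V -> N),
    [/\ is_tree t,
        forall a, tdeg t a <= 3,
        injective L,
        forall a, (tdeg t a <= 1) <-> (exists x, L x = a)
      & forall u v, t u v ->
          cut_rank [set x | connect (del_edge t u v) u (L x)] <= k].

(* rw(G) <= k  (graphs with at most one vertex have rank-width 0) *)
Definition rw_le (k : nat) : Prop := #|V| <= 1 \/ rank_decomp k.

Definition is_rw (r : nat) : Prop := rw_le r /\ forall k, rw_le k -> r <= k.

(* H is a k-flip of G: a partition of V into at most k (possibly empty) parts,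
   given by p : V -> 'I_k, and a symmetric relation F on the parts saying which
   (unordered, possibly equal) pairs of parts are flipped. *)
Definition is_kflip (k : nat) (H : rel V) : Prop :=
  exists (p : V -> 'I_k) (F : rel 'I_k),
    symmetric F /\
    forall x y, H x y = (x != y) && (E x y (+) F (p x) (p y)).

Definition isolated (H : rel V) (w : V) : Prop := forall w', ~~ H w w'.

(* fwin k H v : in a position where the previous graph is G_{i-1} = H and the
   runner stands on v_{i-1} = v, the flipper (of width k, radius infinity) can
   force a win.  This is the least fixed point (attractor) characterization of
   the flipper having a winning strategy: the flipper announces a k-flip H' of G,
   then for every vertex w in the component of v in H, either w is isolated in H'
   (the flipper wins now) or the flipper can force a win from (H', w). *)
Inductive fwin (k : nat) : rel V -> V -> Prop :=
| fwin_intro (H : rel V) (v : V) (H' : rel V) :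
    is_kflip k H' ->
    (forall w, connect H v w -> isolated H' w \/ fwin k H' w) ->
    fwin k H v.

Definition flipper_wins (k : nat) : Prop := forall v0 : V, fwin k E v0.

Definition is_fw (f : nat) : Prop :=
  flipper_wins f /\ forall k, flipper_wins k -> f <= k.

End Defs.

(* Main.v *)
Require Import Defs.
From mathcomp Require Import all_boot all_algebra.
From mathcomp Require Import zify.
From Stdlib Require Import Classical.
Set Implicit Arguments. Unset Strict Implicit. Unset Printing Implicit Defensive.

Module LinAlgM.
Import GRing.Theory.
Section LinAlg.
Variable G : sgraph.
Local Notation V := (vert G).
Local Notation E := (@adj G).
Local Notation n := #|V|.
Local Open Scope ring_scope.

Definition av (x y : V) : 'F_2 := if E x y then 1 else 0.

Definition colv (R : {set V}) (y : V) : 'rV['F_2]_n :=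
  \row_(i < n) (if (enum_val i \in R) && E (enum_val i) y then 1 else 0).

Definition cm (R C : {set V}) : 'M['F_2]_(#|C|, n) :=
  \matrix_(j < #|C|) colv R (enum_val j).

Definition mrk (R C : {set V}) : nat := \rank (cm R C).

Definition adjM (C R : {set V}) : 'M['F_2]_(#|C|, #|R|) :=
  \matrix_(i, j) av (enum_val i) (enum_val j).

Definition Pm (R : {set V}) : 'M['F_2]_(#|R|, n) :=
  \matrix_(i, l) (if enum_val i == enum_val l then 1 else 0).

Lemma colv_sub (R C : {set V}) y : y \in C -> (colv R y <= cm R C)%MS.
Proof.
move=> Hy; have -> : colv R y = row (enum_rank_in Hy y) (cm R C).
  by rewrite rowK enum_rankK_in.
exact: row_sub.
Qed.

Lemma cm_subP (R C : {set V}) m (M : 'M['F_2]_(m, n)) :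
  (forall y, y \in C -> (colv R y <= M)%MS) -> (cm R C <= M)%MS.
Proof.
move=> H; apply/row_subP => j; rewrite rowK; apply: H; exact: enum_valP.
Qed.

Lemma Pm_free (R : {set V}) : row_free (Pm R).
Proof.
rewrite /row_free eqn_leq rank_leq_row /=.
apply: leq_trans (_ : \rank (1%:M : 'M['F_2]_#|R|) <= _)%N; first by rewrite mxrank1.
have -> : (1%:M : 'M['F_2]_#|R|) = Pm R *m (Pm R)^T.
  apply/matrixP => i j; rewrite !mxE.
  rewrite (bigD1 (enum_rank (enum_val i))) //= big1.
    rewrite !mxE enum_rankK eqxx mul1r addr0.
    by rewrite (inj_eq enum_val_inj) eq_sym; case: (j == i).
  move=> l /negPf Hl; rewrite !mxE.
  case: eqP => Hi; last by rewrite mul0r.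
  by rewrite Hi enum_valK eqxx in Hl.
exact: mxrankM_maxl.
Qed.

Lemma cmE (R C : {set V}) : cm R C = adjM C R *m Pm R.
Proof.
apply/matrixP => j l; rewrite !mxE.
case: (boolP (enum_val l \in R)) => HR /=.
  rewrite (bigD1 (enum_rank_in HR (enum_val l))) //= big1.
    rewrite !mxE enum_rankK_in // eqxx mulr1 addr0 /av adj_sym.
    by case: (E _ _).
  move=> i Hi; rewrite !mxE.
  case: eqP => He; last by rewrite mulr0.
  by move: Hi; rewrite -{1}(enum_valK_in HR i) He eqxx.
rewrite big1 // => i _; rewrite !mxE.
case: eqP => He; last by rewrite mulr0.
  by move: HR; rewrite -He enum_valP.
Qed.

Lemma mrkE (R C : {set V}) : mrk R C = \rank (adjM C R).
Proof. by rewrite /mrk cmE mxrankMfree // Pm_free. Qed.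

Lemma adjM_tr (R C : {set V}) : adjM R C = (adjM C R)^T.
Proof. by apply/matrixP => i j; rewrite !mxE /av adj_sym. Qed.

Lemma mrk_sym (R C : {set V}) : mrk R C = mrk C R.
Proof. by rewrite !mrkE adjM_tr mxrank_tr. Qed.

Lemma mrk_leC (R C : {set V}) : (mrk R C <= #|C|)%N.
Proof. exact: rank_leq_row. Qed.

Lemma mrk_leR (R C : {set V}) : (mrk R C <= #|R|)%N.
Proof. by rewrite mrkE; exact: rank_leq_col. Qed.

Lemma cut_rankE (A : {set V}) : cut_rank A = mrk A (~: A).
Proof. by rewrite mrk_sym mrkE. Qed.

Definition Dm (R : {set V}) : 'M['F_2]_n :=
  diag_mx (\row_(i < n) (if enum_val i \in R then 1 else 0)).

Lemma cm_restr (R Z C : {set V}) : R \subset Z -> cm R C = cm Z C *m Dm R.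
Proof.
move=> sRZ; apply/matrixP => j l; rewrite mul_mx_diag !mxE.
case: (boolP (enum_val l \in R)) => HR.
  by rewrite (subsetP sRZ _ HR) /= mulr1.
by rewrite /= mulr0.
Qed.

Lemma cm_restr_sub (R Z C C' : {set V}) : R \subset Z ->
  (cm Z C <= cm Z C')%MS -> (cm R C <= cm R C')%MS.
Proof. by move=> sRZ H; rewrite !(cm_restr C sRZ) (cm_restr C' sRZ) submxMr. Qed.

Lemma cm_monoC (R C C' : {set V}) : C \subset C' -> (cm R C <= cm R C')%MS.
Proof. by move=> sC; apply: cm_subP => y Hy; apply: colv_sub; apply: (subsetP sC). Qed.

Lemma mrk_mono (R R' C C' : {set V}) : R \subset R' -> C \subset C' -> (mrk R C <= mrk R' C')%N.
Proof.
move=> sR sC; rewrite /mrk (cm_restr C sR).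
apply: leq_trans (mxrankM_maxl _ _) _.
by apply: mxrankS; apply: cm_monoC.
Qed.

Lemma cm_U (R C1 C2 : {set V}) : (cm R (C1 :|: C2) <= cm R C1 + cm R C2)%MS.
Proof.
apply: cm_subP => y; rewrite in_setU => /orP [H|H].
  by apply: submx_trans (colv_sub R H) (addsmxSl _ _).
by apply: submx_trans (colv_sub R H) (addsmxSr _ _).
Qed.

Lemma rank_adds m1 m2 (A : 'M['F_2]_(m1, n)) (B : 'M['F_2]_(m2, n)) :
  (\rank (A + B)%MS <= \rank A + \rank B)%N.
Proof. exact: (mxrank_adds_leqif A B).1. Qed.

Lemma mrk_U (R C1 C2 : {set V}) : (mrk R (C1 :|: C2) <= mrk R C1 + mrk R C2)%N.
Proof. apply: leq_trans (mxrankS (cm_U R C1 C2)) _; exact: rank_adds. Qed.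


Lemma flip_closed_rank k (p : V -> 'I_k) (F : rel 'I_k) (H : rel V) (X : {set V}) :
  (forall x y, H x y = (x != y) && (E x y (+) F (p x) (p y))) ->
  (forall x y, x \in X -> y \notin X -> ~~ H x y) ->
  (mrk X (~: X) <= k)%N.
Proof.
move=> HH Hcl; rewrite mrkE.
pose A : 'M['F_2]_(#|~: X|, k) := \matrix_(i, l) (if F l (p (enum_val i)) then 1 else 0).
pose B : 'M['F_2]_(k, #|X|) := \matrix_(l, j) (if p (enum_val j) == l then 1 else 0).
have -> : adjM (~: X) X = A *m B.
  apply/matrixP => i j; rewrite !mxE.
  rewrite (bigD1 (p (enum_val j))) //= big1.
    rewrite !mxE eqxx mulr1 addr0.
    have Hj : enum_val j \in X := enum_valP j.
    have Hi : enum_val i \notin X by have := enum_valP i; rewrite in_setC.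
    have := Hcl _ _ Hj Hi; rewrite HH.
    have -> : (enum_val j != enum_val i) by apply/eqP => He; move: Hi; rewrite -He Hj.
    rewrite /= /av adj_sym; case: (E _ _); case: (F _ _) => //.
  move=> l Hl; rewrite !mxE; case: eqP => He; last by rewrite mulr0.
  by rewrite He eqxx in Hl.
apply: leq_trans (mxrankM_maxr _ _) _; exact: rank_leq_row.
Qed.

Lemma split_bound (Z X W : {set V}) k :
  (mrk X (~: X) <= k)%N -> (cm Z (~: Z) <= cm Z W)%MS ->
  (mrk (Z :&: X) (~: (Z :&: X)) <= #|W :&: X| + k)%N.
Proof.
move=> HX HW; set R := Z :&: X.
have sRZ : R \subset Z by apply: subsetIl.
have sRX : R \subset X by apply: subsetIr.
have Hs : (cm R (~: R) <= cm R (W :&: X) + cm R ((W :\: X) :|: (Z :\: X)))%MS.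
  apply: cm_subP => y; rewrite in_setC in_setI negb_and => /orP [HyZ|HyX].
    apply: submx_trans (colv_sub R (_ : y \in ~: Z)) _; first by rewrite in_setC.
    apply: submx_trans (cm_restr_sub sRZ HW) _.
    apply: submx_trans (cm_monoC R (_ : W \subset (W :&: X) :|: (W :\: X))) _.
      by apply/subsetP => w Hw; rewrite in_setU in_setI in_setD Hw andbT; case: (w \in X).
    apply: submx_trans (cm_U _ _ _) _.
    apply: addsmxS => //; apply: cm_monoC; exact: subsetUl.
  case: (boolP (y \in Z)) => HyZ.
    apply: submx_trans (colv_sub R (_ : y \in (W :\: X) :|: (Z :\: X))) _.
      by rewrite in_setU !in_setD HyX HyZ orbT.
    exact: addsmxSr.
  apply: submx_trans (colv_sub R (_ : y \in ~: Z)) _; first by rewrite in_setC.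
  apply: submx_trans (cm_restr_sub sRZ HW) _.
  apply: submx_trans (cm_monoC R (_ : W \subset (W :&: X) :|: (W :\: X))) _.
    by apply/subsetP => w Hw; rewrite in_setU in_setI in_setD Hw andbT; case: (w \in X).
  apply: submx_trans (cm_U _ _ _) _.
  apply: addsmxS => //; apply: cm_monoC; exact: subsetUl.
apply: leq_trans (mxrankS Hs) _; apply: leq_trans (rank_adds _ _) _.
apply: leq_add; first exact: mrk_leC.
apply: leq_trans HX; apply: mrk_mono => //.
apply/subsetP => y; rewrite in_setU !in_setD in_setC => /orP [] /andP [] -> //.
Qed.

Lemma basis_exists (Z C : {set V}) :
  exists W : {set V}, [/\ W \subset C, #|W| = mrk Z C & (cm Z C <= cm Z W)%MS].
Proof.
set A := cm Z C; set f := maxrankfun A.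
exists [set enum_val (f i) | i : 'I_(\rank A)]; split.
- by apply/subsetP => y /imsetP [i _ ->]; exact: enum_valP.
- rewrite card_imset; first by rewrite card_ord.
  by move=> i j /enum_val_inj /maxrankfun_inj.
- apply: submx_trans (_ : (A <= rowsub f A)%MS) _; first by rewrite eq_maxrowsub.
  apply/row_subP => i; rewrite row_rowsub /A rowK.
  by apply: colv_sub; apply/imsetP; exists i.
Qed.

Lemma card_labels (R B : {set V}) :
  (#|[set colv R x | x in B]| <= 2 ^ mrk R B)%N.
Proof.
set M := cm R B.
apply: leq_trans (_ : #|[set D *m row_base M | D : 'rV['F_2]_(\rank M)]| <= _)%N.
  apply: subset_leq_card; apply/subsetP => v /imsetP [x Hx ->].
  have : (colv R x <= row_base M)%MS by rewrite eq_row_base; exact: colv_sub.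
  by case/submxP => D ->; apply/imsetP; exists D.
apply: leq_trans (leq_imset_card _ _) _.
by rewrite card_mx card_Fp // mul1n.
Qed.

End LinAlg.
End LinAlgM.
Export LinAlgM.

Section Runner.
Variable G : sgraph.
Local Notation V := (vert G).
Local Notation E := (@adj G).

Lemma kflip_sym k (H : rel V) : is_kflip k H -> symmetric H.
Proof.
case=> p [F [HF HH]] x y; rewrite !HH eq_sym adj_sym HF //.
Qed.

Lemma kflip_closed k (H : rel V) (X : {set V}) : is_kflip k H ->
  (forall x y, H x y -> x \in X -> y \in X) -> mrk X (~: X) <= k.
Proof.
case=> p [F [HF HH]] Hcl; apply: (flip_closed_rank HH) => x y Hx Hy.
by apply/negP => Hxy; move: (Hcl _ _ Hxy Hx); rewrite (negPf Hy).
Qed.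

Variables (k : nat) (W : {set V}).
Hypothesis W2 : 2 <= #|W|.
Hypothesis Hns : forall X : {set V}, mrk X (~: X) <= k ->
  ~ (#|W| <= 3 * #|X :&: W| <= 2 * #|W|).

Definition compo (H : rel V) c := [set w | connect H c w].
Definition bigc H c := 2 * #|W| < 3 * #|compo H c :&: W|.
Definition closedb (H : rel V) (X : {set V}) :=
  [forall x, forall y, (H x y && (x \in X)) ==> (y \in X)].

Lemma closedbP (H : rel V) (X : {set V}) : reflect (forall x y, H x y -> x \in X -> y \in X) (closedb H X).
Proof.
apply: (iffP forallP) => [Hc x y Hxy Hx | Hc x].
  by move: (Hc x) => /forallP /(_ y); rewrite Hxy Hx.
by apply/forallP => y; apply/implyP => /andP [Hxy Hx]; exact: Hc Hxy Hx.
Qed.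

Lemma comp_closed (H : rel V) c : closedb H (compo H c).
Proof.
apply/closedbP => x y Hxy; rewrite !inE => Hx.
exact: connect_trans Hx (connect1 Hxy).
Qed.

Lemma claim1 (H : rel V) : is_kflip k H -> exists c, bigc H c.
Proof.
move=> Hf.
have rk X : closedb H X -> mrk X (~: X) <= k.
  by move/closedbP; apply: kflip_closed Hf.
case: (boolP [exists c, bigc H c]) => [/existsP // | /existsP Hn].
exfalso.
have Hsmall c : 3 * #|compo H c :&: W| < #|W|.
  rewrite ltnNge; apply/negP => Hge; apply: (Hns (rk _ (comp_closed H c))).
  rewrite Hge /=; rewrite leqNgt; apply/negP => Hb; apply: Hn; by exists c.
pose P X := closedb H X && (3 * #|X :&: W| <= 2 * #|W|).
have P0 : P set0 by rewrite /P set0I cards0 muln0 leq0n andbT; apply/closedbP => x y _; rewrite inE.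
case: (arg_maxnP (fun X => #|X :&: W|) P0) => X /andP [HXc HXs] Hmax.
have HXl : 3 * #|X :&: W| < #|W|.
  rewrite ltnNge; apply/negP => Hge; apply: (Hns (rk _ HXc)); by rewrite Hge HXs.
have [w HwW HwX] : exists2 w, w \in W & w \notin X.
  case: (boolP (W \subset X)) => HWX.
    exfalso; move: HXl; have -> : X :&: W = W by apply/setIidPr.
    lia.
  by case/subsetPn: HWX => w Hw Hnw; exists w.
set X' := X :|: compo H w.
have HX'c : closedb H X'.
  apply/closedbP => x y Hxy; rewrite !inE => /orP [Hx|Hx].
    by rewrite (closedbP _ _ HXc _ _ Hxy Hx).
  by rewrite (connect_trans Hx (connect1 Hxy)) orbT.
have Hcard : #|X' :&: W| <= #|X :&: W| + #|compo H w :&: W|.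
  by rewrite setIUl; apply: leq_trans (leq_card_setU _ _) _.
have HX's : 3 * #|X' :&: W| <= 2 * #|W|.
  apply: leq_trans (leq_mul (leqnn 3) Hcard) _.
  rewrite mulnDr; have := Hsmall w; lia.
have := Hmax X'; rewrite /P HX'c HX's => /(_ isT).
apply/negP; rewrite -ltnNge.
apply: proper_card; rewrite properE; apply/andP; split.
  by apply: setSI; apply: subsetUl.
apply/subsetPn; exists w; last by rewrite inE (negPf HwX).
by rewrite !inE HwW connect0 orbT.
Qed.

Lemma big_inter (H H' : rel V) c c' : bigc H c -> bigc H' c' ->
  exists2 w, w \in W & connect H c w /\ connect H' c' w.
Proof.
rewrite /bigc => Hb Hb'.
case: (eqVneq ((compo H c :&: W) :&: (compo H' c' :&: W)) set0) => [Hne|/set0Pn [w]].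
  exfalso.
  have := cardsUI (compo H c :&: W) (compo H' c' :&: W).
  rewrite Hne cards0 addn0 => Heq.
  have : #|(compo H c :&: W) :|: (compo H' c' :&: W)| <= #|W|.
    by apply: subset_leq_card; rewrite -setIUl subsetIr.
  lia.
by rewrite !inE => /andP [/andP [H1 H2] /andP [H3 _]]; exists w.
Qed.

Lemma big_not_iso (H : rel V) c w : symmetric H -> bigc H c -> connect H c w -> ~ isolated H w.
Proof.
move=> Hsym Hb Hcw Hiso.
have Hge : 2 <= #|compo H c :&: W|.
  move: Hb; rewrite /bigc => Hb; have : 4 <= 2 * #|W| by lia. lia.
have [u Hu Huw] : exists2 u, u \in compo H c :&: W & u != w.
  have := cardsD1 w (compo H c :&: W).
  case: (eqVneq ((compo H c :&: W) :\ w) set0) => [H0|/set0Pn [u]].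
    rewrite H0 cards0; case: (w \in _); lia.
  rewrite !inE => /andP [Huw Hu] _; exists u => //; rewrite !inE; exact: Hu.
move: Hu; rewrite !inE => /andP [Hcu _].
have Hwu : connect H w u.
  apply: connect_trans _ Hcu; by rewrite (sym_connect_sym Hsym).
case/connectP: Hwu => [[|w' p]] /=; first by move=> _ Hu; rewrite Hu eqxx in Huw.
by move=> /andP [Hww' _] _; move: (Hiso w'); rewrite Hww'.
Qed.

Lemma claim4 : forall (H : rel V) v, fwin k H v -> is_kflip k H -> bigc H v -> False.
Proof.
fix IH 3 => H v Hw Hf Hb.
destruct Hw as [H v H' Hf' Hall].
have [c' Hc'] := claim1 Hf'.
have [w HwW [Hvw Hcw]] := big_inter Hb Hc'.
have Hbw : bigc H' w.
  rewrite /bigc; have -> : compo H' w = compo H' c'.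
    apply/setP => z; rewrite !inE.
    by rewrite (same_connect (sym_connect_sym (kflip_sym Hf')) Hcw).
  exact: Hc'.
case: (Hall w Hvw) => [Hiso|Hw'].
  exact: (big_not_iso (kflip_sym Hf') Hc' Hcw Hiso).
exact: (IH H' w Hw' Hf' Hbw).
Qed.

End Runner.

Lemma runner_sep (G : sgraph) k : flipper_wins G k -> 0 < k ->
  forall W : {set vert G}, 2 <= #|W| ->
  exists X : {set vert G}, mrk X (~: X) <= k /\ #|W| <= 3 * #|X :&: W| <= 2 * #|W|.
Proof.
move=> Hfw Hk W W2.
case: (boolP [exists X : {set vert G}, (mrk X (~: X) <= k) && (#|W| <= 3 * #|X :&: W| <= 2 * #|W|)]).
  by case/existsP => X /andP [H1 H2]; exists X.
move/existsP => Hn; exfalso.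
have Hns : forall X : {set vert G}, mrk X (~: X) <= k ->
  ~ (#|W| <= 3 * #|X :&: W| <= 2 * #|W|).
  by move=> X H1 H2; apply: Hn; exists X; rewrite H1 H2.
have HE : is_kflip (G:=G) k (@adj G).
  exists (fun _ => Ordinal Hk), (fun _ _ => false); split => // x y.
  rewrite addbF; case: eqP => [->|//]; by rewrite adj_irr.
have [c Hc] := claim1 W2 Hns HE.
exact: (claim4 W2 Hns (Hfw c) HE Hc).
Qed.

Section Build.
Variable G : sgraph.
Local Notation V := (vert G).
Local Notation E := (@adj G).
Variable k : nat.
Hypothesis k1 : 0 < k.
Hypothesis Hsep : forall W : {set V}, 2 <= #|W| ->
  exists X : {set V}, mrk X (~: X) <= k /\ #|W| <= 3 * #|X :&: W| <= 2 * #|W|.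

Local Notation crk A := (mrk A (~: A)).

Lemma split_set (Z : {set V}) : 2 <= #|Z| -> crk Z <= 3 * k + 1 ->
  exists Z1 Z2 : {set V}, [/\ Z1 != set0, Z2 != set0, Z1 :|: Z2 = Z,
     Z1 :&: Z2 = set0 & crk Z1 <= 3 * k + 1 /\ crk Z2 <= 3 * k + 1].
Proof.
move=> Z2 Hr.
case: (leqP (crk Z) (3 * k)) => Hle.
  have [v Hv] : exists v, v \in Z.
    by apply/set0Pn; rewrite -card_gt0; apply: leq_trans Z2.
  exists [set v], (Z :\ v); split.
  - by apply/set0Pn; exists v; rewrite inE.
  - apply/set0Pn; have := cardsD1 v Z; rewrite Hv => Hc.
    have : 0 < #|Z :\ v| by lia.
    by rewrite card_gt0 => /set0Pn.
  - by apply/setP => x; rewrite !inE; case: eqP => // ->.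
  - by apply/setP => x; rewrite !inE; case: (x == v).
  split.
    apply: leq_trans (mrk_leR _ _) _; rewrite cards1; lia.
  have -> : ~: (Z :\ v) = ~: Z :|: [set v].
    by apply/setP => x; rewrite !inE negb_and negbK orbC.
  apply: leq_trans (mrk_U _ _ _) _.
  have H1 : mrk (Z :\ v) (~: Z) <= crk Z by apply: mrk_mono => //; apply: subD1set.
  have H2 : mrk (Z :\ v) [set v] <= 1 by apply: leq_trans (mrk_leC _ _) _; rewrite cards1.
  lia.
have Hr' : crk Z = 3 * k + 1 by lia.
have [W [HWs HWc HWsp]] := basis_exists Z (~: Z).
have W2 : 2 <= #|W| by rewrite HWc Hr'; lia.
have [X [HX /andP [Hb1 Hb2]]] := Hsep W2.
have HXc : crk (~: X) <= k by rewrite setCK mrk_sym.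
have B1 := split_bound HX HWsp.
have B2 := split_bound HXc HWsp.
have Hcd : #|W :&: X| + #|W :&: ~: X| = #|W| by rewrite -setDE cardsID.
rewrite setIC in Hb1 Hb2.
have Hc1 : crk (Z :&: X) <= 3 * k by lia.
have Hc2 : crk (Z :&: ~: X) <= 3 * k by lia.
exists (Z :&: X), (Z :&: ~: X); split.
- apply/eqP => H0; move: Hc2; have -> : Z :&: ~: X = Z.
    by rewrite -setDE; apply/setDidPl; rewrite -setI_eq0 H0.
  lia.
- apply/eqP => H0; move: Hc1; have -> : Z :&: X = Z.
    by apply/setIidPl; move: H0; rewrite -setDE => /eqP; rewrite setD_eq0.
  lia.
- by rewrite -setDE setID.
- by rewrite setIACA setICr setI0.
- lia.
Qed.

Definition lam (Fam : {set {set V}}) (Z : {set V}) :=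
  [/\ Z \in Fam,
      (forall A, A \in Fam -> A \subset Z /\ A != set0),
      (forall A B, A \in Fam -> B \in Fam -> [|| A \subset B, B \subset A | A :&: B == set0]),
      (forall x, x \in Z -> [set x] \in Fam) &
      ((forall A, A \in Fam -> 2 <= #|A| -> exists B C, [/\ B \in Fam, C \in Fam,
                     B != set0 /\ C != set0, B :|: C = A & B :&: C = set0])
    /\ (forall A, A \in Fam -> crk A <= 3 * k + 1))].

Lemma build_fam : forall (m : nat) (Z : {set V}), #|Z| <= m -> Z != set0 ->
  crk Z <= 3 * k + 1 -> exists Fam, lam Fam Z.
Proof.
elim=> [|m IH] Z Hm Hne Hr.
  by move: Hne; rewrite -card_gt0; lia.
case: (leqP 2 #|Z|) => HZ.
  have [Z1 [Z2 [H1 H2 HU HI [Hr1 Hr2]]]] := split_set HZ Hr.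
  have Hcard : #|Z1| + #|Z2| = #|Z| by rewrite -HU -cardsUI HI cards0 addn0.
  have Hp1 : 0 < #|Z1| by rewrite card_gt0.
  have Hp2 : 0 < #|Z2| by rewrite card_gt0.
  have HZ1 : #|Z1| <= m by lia.
  have [F1 [I1 S1 L1 X1 [P1 R1]]] := IH Z1 HZ1 H1 Hr1.
  have HZ2 : #|Z2| <= m by lia.
  have [F2 [I2 S2 L2 X2 [P2 R2]]] := IH Z2 HZ2 H2 Hr2.
  have sZ1 : Z1 \subset Z by rewrite -HU subsetUl.
  have sZ2 : Z2 \subset Z by rewrite -HU subsetUr.
  have disj (A B : {set V}) : A \subset Z1 -> B \subset Z2 -> A :&: B == set0.
    move=> HA HB; rewrite -subset0 -HI; exact: setISS.
  exists (Z |: (F1 :|: F2)); split.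
  - by rewrite !inE eqxx.
  - move=> A; rewrite !inE => /orP [/eqP ->|/orP [HA|HA]]; first by rewrite subxx.
      by have [s ne] := S1 A HA; split => //; apply: subset_trans s sZ1.
    by have [s ne] := S2 A HA; split => //; apply: subset_trans s sZ2.
  - move=> A B; rewrite !inE => /orP [/eqP ->|/orP [HA|HA]] /orP [/eqP ->|/orP [HB|HB]].
    + by rewrite subxx.
    + by rewrite (subset_trans (S1 B HB).1 sZ1) orbT.
    + by rewrite (subset_trans (S2 B HB).1 sZ2) orbT.
    + by rewrite (subset_trans (S1 A HA).1 sZ1).
    + exact: L1.
    + by rewrite disj ?orbT //; [exact: (S1 A HA).1 | exact: (S2 B HB).1].
    + by rewrite (subset_trans (S2 A HA).1 sZ2).
    + by rewrite setIC disj ?orbT //; [exact: (S1 B HB).1 | exact: (S2 A HA).1].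
    + exact: L2.
  - move=> x; rewrite -HU inE => /orP [Hx|Hx]; rewrite !inE.
      by rewrite X1 // orbT.
    by rewrite X2 // !orbT.
  split.
  - move=> A; rewrite !inE => /orP [/eqP ->|/orP [HA|HA]] HA2.
    + exists Z1, Z2; split => //; by rewrite !inE ?I1 ?I2 ?orbT.
    + have [B [C [HB HC Hne' HU' HI']]] := P1 A HA HA2.
      by exists B, C; split => //; rewrite !inE ?HB ?HC ?orbT.
    + have [B [C [HB HC Hne' HU' HI']]] := P2 A HA HA2.
      by exists B, C; split => //; rewrite !inE ?HB ?HC ?orbT.
  - move=> A; rewrite !inE => /orP [/eqP ->|/orP [HA|HA]] //; [exact: R1 | exact: R2].
have [x Hx] : exists x, x \in Z by apply/set0Pn.
have HZx : Z = [set x].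
  apply/eqP; rewrite eq_sym eqEcard sub1set Hx cards1 /=; lia.
exists [set Z]; split.
- by rewrite inE.
- by move=> A; rewrite inE => /eqP ->; rewrite subxx.
- by move=> A B; rewrite !inE => /eqP -> /eqP ->; rewrite subxx.
- by move=> y; rewrite HZx inE => /eqP ->; rewrite inE.
split.
- by move=> A; rewrite inE => /eqP ->; lia.
- by move=> A; rewrite inE => /eqP ->.
Qed.

End Build.

Section Tree.
Variable G : sgraph.
Local Notation V := (vert G).
Local Notation crk A := (mrk A (~: A)).
Variables (Fam : {set {set V}}) (K : nat).
Hypothesis HT : [set: V] \in Fam.
Hypothesis Hne : forall A, A \in Fam -> A != set0.
Hypothesis Hlam : forall A B, A \in Fam -> B \in Fam -> [|| A \subset B, B \subset A | A :&: B == set0].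
Hypothesis Hsing : forall x, [set x] \in Fam.
Hypothesis Hsplit : forall A, A \in Fam -> 2 <= #|A| -> exists B C, [/\ B \in Fam, C \in Fam,
                     B != set0 /\ C != set0, B :|: C = A & B :&: C = set0].
Hypothesis Hcr : forall A, A \in Fam -> crk A <= K.

Definition node := {A : {set V} | A \in Fam}.
Definition cover (A B : {set V}) :=
  (A \proper B) && [forall C : node, ~~ ((A \proper val C) && (val C \proper B))].
Definition tr (a b : node) := cover (val a) (val b) || cover (val b) (val a).
Definition rt : node := exist _ [set: V] HT.
Definition Ln (x : V) : node := exist _ [set x] (Hsing x).

Lemma nodeP (a : node) : val a \in Fam. Proof. exact: valP. Qed.
Lemma node_ne (a : node) : val a != set0. Proof. exact: Hne (nodeP a). Qed.

Lemma lamN (a b : node) : [|| val a \subset val b, val b \subset val a | val a :&: val b == set0].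
Proof. exact: Hlam (nodeP a) (nodeP b). Qed.

Lemma node_eq (a b : node) : val a = val b -> a = b.
Proof. exact: val_inj. Qed.

Lemma nested (a b : node) x : x \in val a -> x \in val b ->
  val a \subset val b \/ val b \subset val a.
Proof.
move=> Ha Hb; case/or3P: (lamN a b) => [H|H|/eqP H]; [by left|by right|].
(have : x \in val a :&: val b by rewrite inE Ha Hb); by rewrite H inE.
Qed.

Lemma has_elem (a : node) : exists x, x \in val a.
Proof. by apply/set0Pn; exact: node_ne. Qed.

Lemma coverP A B : cover A B -> A \proper B /\ forall C : node, ~ (A \proper val C /\ val C \proper B).
Proof.
rewrite /cover; case/andP => H1 /forallP H2; split => // C [H3 H4].
by move: (H2 C); rewrite H3 H4.
Qed.

Lemma cover_uniq (a b b' : node) : cover (val a) (val b) -> cover (val a) (val b') -> b = b'.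
Proof.
move=> /coverP [Hab Cb] /coverP [Hab' Cb'].
have [x Hx] := has_elem a.
have Hxb : x \in val b by apply: (subsetP (proper_sub Hab)).
have Hxb' : x \in val b' by apply: (subsetP (proper_sub Hab')).
case: (nested Hxb Hxb') => Hs.
  case: (eqVneq (val b) (val b')) => [/node_eq //|Hn].
  by exfalso; apply: (Cb' b); split => //; rewrite properEneq Hn Hs.
case: (eqVneq (val b') (val b)) => [/node_eq //|Hn].
by exfalso; apply: (Cb b'); split => //; rewrite properEneq Hn Hs.
Qed.

Lemma parent_ex (a : node) : val a != [set: V] -> exists p : node, cover (val a) (val p).
Proof.
move=> Ha.
have P0 : val a \proper val rt by rewrite properEneq Ha subsetT.
case: (@arg_minnP node rt (fun b : node => val a \proper val b) (fun b : node => #|val b|) P0) => p Hp Hmin.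
exists p; apply/andP; split => //; apply/forallP => C; apply/negP => /andP [H1 H2].
by have := Hmin C H1; have := proper_card H2; lia.
Qed.

Lemma sub_child (d : node) A B C : B :|: C = A -> B :&: C = set0 -> B != set0 -> C != set0 ->
  B \in Fam -> C \in Fam -> val d \proper A -> val d \subset B \/ val d \subset C.
Proof.
move=> HU HI HBn HCn HB HC Hd.
have sdA := proper_sub Hd.
have [x Hx] := has_elem d.
pose nb : node := exist _ B HB. pose nc : node := exist _ C HC.
have disj : forall y, y \in B -> y \in C -> False.
  move=> y H1 H2; have : y \in B :&: C by rewrite inE H1 H2.
  by rewrite HI inE.
have sub_cases : forall (e : node), val d \subset val e \/ val e \subset val d \/ val d :&: val e = set0.
  by move=> e; case/or3P: (lamN d e) => [H|H|/eqP H]; auto.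
have HdBC : forall y, y \in val d -> y \in B \/ y \in C.
  move=> y Hy; have : y \in A by apply: (subsetP sdA).
  by rewrite -HU inE => /orP [] ?; auto.
case: (sub_cases nb) => [H|[H|H]]; first by left.
- case: (sub_cases nc) => [H'|[H'|H']]; first by right.
  + exfalso; move: Hd; rewrite properE => /andP [_]; apply/negP; apply/negPn.
    by rewrite -HU; apply/subsetP => y; rewrite inE => /orP [Hy|Hy];
       [apply: (subsetP H) | apply: (subsetP H')].
  + left; apply/subsetP => y Hy; case: (HdBC y Hy) => // HyC.
    (have : y \in val d :&: C by rewrite inE Hy HyC); by rewrite H' inE.
- case: (sub_cases nc) => [H'|[H'|H']]; first by right.
  + right; apply/subsetP => y Hy; case: (HdBC y Hy) => // HyB.
    (have : y \in val d :&: B by rewrite inE Hy HyB); by rewrite H inE.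
  + exfalso; case: (HdBC x Hx) => Hx'.
      (have : x \in val d :&: B by rewrite inE Hx Hx'); by rewrite H inE.
    (have : x \in val d :&: C by rewrite inE Hx Hx'); by rewrite H' inE.
Qed.


Lemma proper_part (B C A : {set V}) : B :|: C = A -> B :&: C = set0 -> C != set0 -> B \proper A.
Proof.
move=> HU HI HC; rewrite properE -HU subsetUl /=.
case/set0Pn: HC => y Hy; apply/negP => /subsetP /(_ y).
rewrite inE Hy orbT => /(_ isT) HyB.
(have : y \in B :&: C by rewrite inE Hy HyB); by rewrite HI inE.
Qed.

Lemma split_cover (a : node) B C (HB : B \in Fam) (HC : C \in Fam) :
  B != set0 -> C != set0 -> B :|: C = val a -> B :&: C = set0 ->
  cover B (val a) /\ (forall d : node, cover (val d) (val a) -> val d = B \/ val d = C).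
Proof.
move=> HBn HCn HU HI.
have pB : B \proper val a by exact: proper_part HU HI HCn.
have pC : C \proper val a by apply: (@proper_part C B) => //; [rewrite setUC | rewrite setIC].
pose nb : node := exist _ B HB; pose nc : node := exist _ C HC.
split.
  apply/andP; split => //; apply/forallP => e; apply/negP => /andP [H1 H2].
  case: (sub_child HU HI HBn HCn HB HC H2) => He.
    by move: H1; rewrite properE He andbF.
  case/set0Pn: HBn => y Hy.
  have HyC : y \in C by apply: (subsetP He); apply: (subsetP (proper_sub H1)).
  (have : y \in B :&: C by rewrite inE Hy HyC); by rewrite HI inE.
move=> d /coverP [Hd Cd].
case: (sub_child HU HI HBn HCn HB HC Hd) => Hs.
  case: (eqVneq (val d) B) => [|Hn]; first by left.
  by exfalso; apply: (Cd nb); split => //; rewrite properEneq Hn Hs.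
case: (eqVneq (val d) C) => [|Hn]; first by right.
by exfalso; apply: (Cd nc); split => //; rewrite properEneq Hn Hs.
Qed.

Lemma single_nochild x (d : node) : ~ cover (val d) [set x].
Proof.
move=> /coverP [Hd _]; have := proper_card Hd; rewrite cards1 ltnS leqn0 cards_eq0.
by rewrite (negPf (node_ne d)).
Qed.

Lemma card_le_vals (S : {set node}) (T : {set {set V}}) :
  (forall b, b \in S -> val b \in T) -> #|S| <= #|T|.
Proof.
move=> H; rewrite -(card_imset S val_inj); apply: subset_leq_card.
by apply/subsetP => y /imsetP [b Hb ->]; exact: H.
Qed.

Lemma parents_le1 (a : node) : #|[set b : node | cover (val a) (val b)]| <= 1.
Proof.
case: (eqVneq [set b : node | cover (val a) (val b)] set0) => [->|/set0Pn [p]].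
  by rewrite cards0.
rewrite inE => Hp; apply: leq_trans (card_le_vals (T := [set val p]) _) _.
  by move=> b; rewrite !inE => Hb; rewrite (cover_uniq Hb Hp).
by rewrite cards1.
Qed.

Lemma children_le2 (a : node) : #|[set b : node | cover (val b) (val a)]| <= 2.
Proof.
case: (leqP 2 #|val a|) => Ha.
  have [B [C [HB HC [HBn HCn] HU HI]]] := Hsplit (nodeP a) Ha.
  have [_ Hch] := split_cover HB HC HBn HCn HU HI.
  apply: leq_trans (card_le_vals (T := [set B; C]) _) _.
    by move=> b; rewrite !inE => /Hch [] ->; rewrite eqxx ?orbT.
  by rewrite cards2; case: (B != C).
have : #|val a| == 1.
  by rewrite eqn_leq -ltnS Ha /= card_gt0 node_ne.
case/cards1P => x Hx.
have -> : [set b : node | cover (val b) (val a)] = set0.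
  by apply/setP => b; rewrite !inE Hx; apply/negP => /single_nochild.
by rewrite cards0.
Qed.

Lemma tdeg_split (a : node) : tdeg tr a =
  #|[set b : node | cover (val a) (val b)] :|: [set b : node | cover (val b) (val a)]|.
Proof. by apply: eq_card => b; rewrite !inE. Qed.

Lemma deg_le3 (a : node) : tdeg tr a <= 3.
Proof.
rewrite tdeg_split; apply: leq_trans (leq_card_setU _ _) _.
by have := parents_le1 a; have := children_le2 a; lia.
Qed.

Lemma leaf_iff (a : node) : tdeg tr a <= 1 <-> exists x, Ln x = a.
Proof.
split.
  move=> Hd; case: (leqP 2 #|val a|) => Ha.
    exfalso.
    have [B [C [HB HC [HBn HCn] HU HI]]] := Hsplit (nodeP a) Ha.
    have [cB _] := split_cover HB HC HBn HCn HU HI.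
    have HU' : C :|: B = val a by rewrite setUC.
    have HI' : C :&: B = set0 by rewrite setIC.
    have [cC _] := split_cover HC HB HCn HBn HU' HI'.
    pose nb : node := exist _ B HB; pose nc : node := exist _ C HC.
    have Hneq : nb != nc.
      apply/negP => /eqP /(congr1 val) /= HBC.
      case/set0Pn: HBn => y Hy.
      (have : y \in B :&: C by rewrite inE Hy -HBC Hy); by rewrite HI inE.
    have : #|[set nb; nc]| <= tdeg tr a.
      rewrite tdeg_split; apply: subset_leq_card; apply/subsetP => b.
      by rewrite !inE => /orP [] /eqP ->; rewrite /= ?cB ?cC orbT.
    by rewrite cards2 Hneq; lia.
  have : #|val a| == 1 by rewrite eqn_leq -ltnS Ha /= card_gt0 node_ne.
  case/cards1P => x Hx; exists x; apply: val_inj; by rewrite Hx.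
case=> x <-; rewrite tdeg_split; apply: leq_trans (leq_card_setU _ _) _.
have -> : [set b : node | cover (val b) (val (Ln x))] = set0.
  by apply/setP => b; rewrite !inE; apply/negP => /single_nochild.
by rewrite cards0 addn0 parents_le1.
Qed.


Lemma del_edge_sym (t : rel node) u v : del_edge t u v =2 del_edge t v u.
Proof.
move=> a b; rewrite /del_edge; congr (_ && ~~ _); exact: orbC.
Qed.

Lemma inv_conn (e : rel node) (P : pred node) :
  (forall a b, e a b -> P a = P b) -> forall x y, connect e x y -> P x = P y.
Proof.
move=> H x y /connectP [p Hp ->]; elim: p x Hp => //= z p IH x /andP [Hxz Hp].
by rewrite (H _ _ Hxz); exact: IH.
Qed.

Lemma tr_sym : symmetric tr.
Proof. by move=> a b; rewrite /tr orbC. Qed.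

Lemma tr_irr : irreflexive tr.
Proof. by move=> a; rewrite /tr /cover properxx. Qed.

Lemma compl0 (A : {set V}) : #|~: A| <= 0 -> A = [set: V].
Proof.
move=> H; have : ~: A = set0 by apply/eqP; rewrite -cards_eq0; lia.
by move=> E; rewrite -(setCK A) E setC0.
Qed.

Lemma to_root_m m (a : node) : #|~: val a| <= m -> connect tr a rt.
Proof.
elim: m a => [|m IH] a Hm.
  have -> : a = rt; last exact: connect0.
  by apply: val_inj => /=; apply: compl0.
case: (eqVneq (val a) [set: V]) => [Ha|Ha].
  by have -> : a = rt by apply: val_inj.
have [p Hp] := parent_ex Ha.
have Hpa : #|~: val p| < #|~: val a| by apply: proper_card; rewrite properC; case/andP: Hp.
apply: connect_trans (connect1 (_ : tr a p)) (IH p _); first by rewrite /tr Hp.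
lia.
Qed.

Lemma conn_all (a b : node) : connect tr a b.
Proof.
apply: connect_trans (to_root_m (leqnn _)) _.
by rewrite (sym_connect_sym tr_sym); exact: to_root_m (leqnn _).
Qed.

Lemma step_aux (c pc a b : node) : cover (val c) (val pc) -> cover (val a) (val b) ->
  ~~ ((a == c) && (b == pc)) -> (val a \subset val c) = (val b \subset val c).
Proof.
move=> Hc Hab Hn.
case Hb: (val b \subset val c).
  by apply: subset_trans Hb; case/andP: Hab => /proper_sub.
apply/negbTE/negP => Hac.
have [x Hx] := has_elem a.
have Hxb : x \in val b by apply: (subsetP (proper_sub (coverP Hab).1)).
have Hxc : x \in val c by apply: (subsetP Hac).
case: (nested Hxb Hxc) => Hs; first by rewrite Hs in Hb.
have pcb : val c \proper val b by rewrite properEneq Hs andbT; apply/eqP => He; rewrite He subxx in Hb.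
case: (eqVneq (val a) (val c)) => [/val_inj Eac|Nac].
  subst a; have := cover_uniq Hab Hc => Ebp; subst b.
  by rewrite !eqxx in Hn.
have := (coverP Hab).2 c; apply; split => //.
by rewrite properEneq Nac Hac.
Qed.

Lemma step_inv (c pc : node) : cover (val c) (val pc) ->
  forall a b, del_edge tr c pc a b -> (val a \subset val c) = (val b \subset val c).
Proof.
move=> Hc a b; rewrite /del_edge /tr negb_or => /andP [/orP [H|H] /andP [H1 H2]].
  exact: step_aux Hc H H1.
by symmetry; apply: step_aux Hc H _; rewrite andbC.
Qed.

Lemma del_sym (c pc : node) : symmetric (del_edge tr c pc).
Proof.
move=> a b; rewrite /del_edge tr_sym; congr (_ && ~~ _).
by rewrite orbC; congr (_ || _); rewrite andbC.
Qed.

Lemma up_conn_m (c pc : node) (Hc : cover (val c) (val pc)) m : forall a b : node,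
  #|~: val a| <= m -> val a \subset val b ->
  (forall a' : node, val a \subset val a' -> val a' \proper val b -> a' != c) ->
  connect (del_edge tr c pc) a b.
Proof.
elim: m => [|m IH] a b Hm Hab Hn.
  have Ha : val a = [set: V] by apply: compl0.
  have -> : a = b; last exact: connect0.
  by apply: val_inj; apply/eqP; rewrite eqEsubset Hab /= Ha subsetT.
case: (eqVneq (val a) (val b)) => [/val_inj ->|Nab]; first exact: connect0.
have pab : val a \proper val b by rewrite properEneq Nab Hab.
have HaT : val a != [set: V].
  apply/eqP => HaT; move: (proper_card pab); rewrite HaT cardsT => Hcc.
  by have := subset_leq_card (subsetT (val b)); rewrite cardsT; lia.
have [p Hp] := parent_ex HaT.
have [x Hx] := has_elem a.
have Hxp : x \in val p by apply: (subsetP (proper_sub (coverP Hp).1)).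
have Hxb : x \in val b by apply: (subsetP Hab).
have Hpb : val p \subset val b.
  case: (nested Hxp Hxb) => // Hbp.
  case: (eqVneq (val b) (val p)) => [->|Nbp]; first exact: subxx.
  by exfalso; have := (coverP Hp).2 b; apply; split => //; rewrite properEneq Nbp.
have Hstep : del_edge tr c pc a p.
  rewrite /del_edge /tr Hp /= negb_or; apply/andP; split.
    by rewrite (negPf (Hn a (subxx _) pab)).
  apply/negP => /andP [/eqP Eap /eqP Epc]; subst.
  have := (coverP Hp).1; have := (coverP Hc).1.
  by rewrite !properE => /andP [-> _] /andP [_ /negP].
apply: connect_trans (connect1 Hstep) (IH p b _ Hpb _).
  have Hlt : #|~: val p| < #|~: val a| by apply: proper_card; rewrite properC; exact: (coverP Hp).1.
  by rewrite -ltnS; apply: leq_trans Hlt Hm.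
move=> a' Ha' Hb'; apply: Hn => //; apply: subset_trans Ha'.
exact: proper_sub (coverP Hp).1.
Qed.

Theorem decomp_from_fam : 2 <= #|V| -> rank_decomp G K.
Proof.
move=> V2.
exists node, tr, Ln; split.
- split; first exact: tr_sym.
  split; first exact: tr_irr.
  split; first exact: conn_all.
  move=> u v; rewrite /tr => /orP [H|H].
    apply/negP => /(inv_conn (step_inv H)); rewrite subxx.
    by move: (coverP H).1; rewrite properE => /andP [_ /negPf ->].
  rewrite (eq_connect (del_edge_sym tr u v)).
  apply/negP => /(inv_conn (step_inv H)); rewrite subxx.
  by move: (coverP H).1; rewrite properE => /andP [_ /negPf ->].
- exact: deg_le3.
- by move=> x y /(congr1 val) /= /set1_inj.
- exact: leaf_iff.
move=> u v; rewrite /tr => /orP [H|H].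
  have -> : [set x | connect (del_edge tr u v) u (Ln x)] = val u.
    apply/setP => x; rewrite inE; apply/idP/idP.
      by move/(inv_conn (step_inv H)); rewrite subxx /= sub1set => <-.
    move=> Hx; rewrite (sym_connect_sym (del_sym u v)).
    apply: (up_conn_m H (leqnn _)); first by rewrite /= sub1set.
    by move=> a' _ Hp; apply/eqP => E; move: Hp; rewrite E properxx.
  by rewrite cut_rankE; apply: Hcr; exact: nodeP.
have -> : [set x | connect (del_edge tr u v) u (Ln x)] = ~: val v.
  apply/setP => x; rewrite inE in_setC (eq_connect (del_edge_sym tr u v)); apply/idP/idP.
    move/(inv_conn (step_inv H)) => /=; rewrite sub1set => <-.
    by move: (coverP H).1; rewrite properE => /andP [_ ->].
  move=> Hx; apply: connect_trans (_ : connect _ u rt) _.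
    apply: (up_conn_m H (leqnn _)); first exact: subsetT.
    move=> a' Ha' _; apply/eqP => E; subst a'.
    by move: (coverP H).1; rewrite properE => /andP [_ /negP].
  rewrite (sym_connect_sym (del_sym v u)).
  apply: (up_conn_m H (leqnn _)); first exact: subsetT.
  move=> a' Ha' _; apply/eqP => E; subst a'.
  by move: Ha'; rewrite /= sub1set (negPf Hx).
rewrite cut_rankE setCK mrk_sym; apply: Hcr; exact: nodeP.
Qed.

End Tree.

Lemma fwin0_empty (G : sgraph) (H : rel (vert G)) v : fwin 0 H v -> False.
Proof. by case=> _ _ H' [p _] _; case: (p v). Qed.

Theorem lower_bound (G : sgraph) k : flipper_wins G k -> rw_le G (3 * k + 1).
Proof.
move=> Hfw; case: (leqP #|vert G| 1) => HV; first by left.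
right.
have [v0 _] : exists v : vert G, v \in [set: vert G].
  by apply/set0Pn; rewrite -card_gt0 cardsT; lia.
have k1 : 0 < k.
  case: k Hfw => // Hfw; exfalso; exact: fwin0_empty (Hfw v0).
have Hsep := runner_sep Hfw k1.
have Hr : mrk [set: vert G] (~: [set: vert G]) <= 3 * k + 1.
  by rewrite setCT; apply: leq_trans (mrk_leC _ _) _; rewrite cards0.
have Hne : [set: vert G] != set0 by apply/set0Pn; exists v0; rewrite inE.
have [Fam [I1 S1 L1 X1 [P1 R1]]] := build_fam k1 Hsep (leqnn _) Hne Hr.
apply: (decomp_from_fam I1 _ L1 _ P1 R1); last lia.
- by move=> A /S1 [].
- by move=> x; apply: X1; rewrite inE.
Qed.

Section Flips.
Variable G : sgraph.
Local Notation V := (vert G).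
Local Notation E := (@adj G).
Local Notation crk A := (mrk A (~: A)).

Lemma kflip_enc (T : finType) (lab : V -> T) (R : rel T) k (H : rel V) :
  symmetric R -> #|[set lab x | x in [set: V]]| <= k ->
  (forall x y, H x y = (x != y) && (E x y (+) R (lab x) (lab y))) ->
  is_kflip k H.
Proof.
move=> Rsym Hk HH.
set Lab := [set lab x | x in [set: V]].
have Hin x : lab x \in Lab by apply: imset_f; rewrite inE.
pose p x : 'I_k := widen_ord Hk (enum_rank_in (Hin x) (lab x)).
have Hp x y : (p x == p y) = (lab x == lab y).
  apply/eqP/eqP => [Hxy|Hl].
    have := congr1 val Hxy => /= /val_inj Hr.
    by rewrite -(enum_rankK_in (Hin x) (Hin x)) -(enum_rankK_in (Hin y) (Hin y)) Hr.
  apply: val_inj => /=; congr (val _).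
  by apply: enum_val_inj; rewrite !enum_rankK_in // Hl.
pose F (i j : 'I_k) := [exists x, exists y, [&& p x == i, p y == j & R (lab x) (lab y)]].
exists p, F; split.
  move=> i j; apply/existsP/existsP => [[x /existsP [y /and3P [H1 H2 H3]]]|[x /existsP [y /and3P [H1 H2 H3]]]];
    by exists y; apply/existsP; exists x; rewrite H1 H2 Rsym.
move=> x y; rewrite HH; congr (_ && (_ (+) _)).
apply/idP/existsP => [HR|[x' /existsP [y' /and3P [H1 H2 H3]]]].
  by exists x; apply/existsP; exists y; rewrite !eqxx HR.
by move: H1 H2; rewrite !Hp => /eqP <- /eqP <-.
Qed.

Lemma card_bigcup_le (I T : finType) (P : {pred I}) (F : I -> {set T}) :
  #|\bigcup_(i in P) F i| <= \sum_(i in P) #|F i|.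
Proof.
apply: (big_ind2 (fun (A : {set T}) n => #|A| <= n)); first by rewrite cards0.
  by move=> A1 n1 A2 n2 H1 H2; apply: leq_trans (leq_card_setU _ _) _; apply: leq_add.
by [].
Qed.

Definition block (T : finType) (key : V -> T) (c : T) := [set x | key x == c].

Lemma flip_blocks (T : finType) (key : V -> T) (Ks : {set T}) m r k :
  (forall x, key x \in Ks) -> #|Ks| <= m -> m * 2 ^ r <= k ->
  (forall c, crk (block key c) <= r) ->
  exists H : rel V, is_kflip k H /\ forall x y, H x y = [&& x != y, key x == key y & E x y].
Proof.
move=> HKs Hm Hk Hr.
pose lab x := (key x, colv (~: block key (key x)) x).
pose R (a b : T * 'rV['F_2]_#|V|) :=
  (a.1 != b.1) && [exists x, exists y, [&& lab x == a, lab y == b & E x y]].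
have Rsym : symmetric R.
  move=> a b; rewrite /R eq_sym; congr (_ && _).
  apply/existsP/existsP => [[x /existsP [y /and3P [H1 H2 H3]]]|[x /existsP [y /and3P [H1 H2 H3]]]];
    by exists y; apply/existsP; exists x; rewrite H1 H2 adj_sym.
(* adjacency across blocks is determined by labels *)
have Eval (x y : V) : key y != key x ->
   (colv (~: block key (key x)) x) ord0 (enum_rank y) = (if E x y then 1 else 0)%R.
  move=> Hne; rewrite mxE enum_rankK !inE Hne adj_sym.
  by case: (E x y).
have Hconst x y x' y' : lab x = lab x' -> lab y = lab y' -> key x != key y -> E x y = E x' y'.
  rewrite /lab => [[Hkx Hcx] [Hky Hcy]] Hne.
  have e1 : E x y = E x' y.
    have Hne' : key y != key x by rewrite eq_sym.
    have Hne'' : key y != key x' by rewrite -Hkx.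
    have := Eval x y Hne'; rewrite Hcx (Eval x' y Hne'').
    by case: (E x y); case: (E x' y) => // /eqP; rewrite ?oner_eq0 // eq_sym oner_eq0.
  have e2 : E x' y = E x' y'.
    have Hne' : key x' != key y by rewrite -Hkx.
    have Hne'' : key x' != key y' by rewrite -Hky.
    rewrite (adj_sym x' y) (adj_sym x' y').
    have := Eval y x' Hne'; rewrite Hcy (Eval y' x' Hne'').
    by case: (E y x'); case: (E y' x') => // /eqP; rewrite ?oner_eq0 // eq_sym oner_eq0.
  by rewrite e1 e2.
have HRlab x y : R (lab x) (lab y) = (key x != key y) && E x y.
  rewrite /R /=; case: (eqVneq (key x) (key y)) => //= Hne.
  apply/existsP/idP => [[x' /existsP [y' /and3P [/eqP H1 /eqP H2 H3]]]|HE].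
    by rewrite (Hconst x y x' y') //.
  by exists x; apply/existsP; exists y; rewrite !eqxx HE.
exists (fun x y => (x != y) && (E x y (+) R (lab x) (lab y))); split.
  apply: (kflip_enc Rsym _ (fun x y => erefl)).
  set Lab := [set lab x | x in [set: V]].
  have sub : Lab \subset \bigcup_(c in Ks) [set (c, v) | v in [set colv (~: block key c) x | x in block key c]].
    apply/subsetP => a /imsetP [x _ ->]; apply/bigcupP; exists (key x) => //.
    apply/imsetP; exists (colv (~: block key (key x)) x) => //.
    by apply/imsetP; exists x; rewrite // inE.
  apply: leq_trans (subset_leq_card sub) _.
  apply: leq_trans (card_bigcup_le _ _) _.
  apply: leq_trans (_ : \sum_(c in Ks) 2 ^ r <= _).
    apply: leq_sum => c _.
    apply: leq_trans (leq_imset_card _ _) _.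
    apply: leq_trans (card_labels _ _) _.
    by rewrite leq_exp2l // -mrk_sym -(setCK (block key c)) setCK.
  rewrite sum_nat_const; apply: leq_trans Hk; exact: leq_mul.
move=> x y /=; rewrite HRlab.
by case: (eqVneq (key x) (key y)) => _; case: (x != y); case: (E x y).
Qed.

End Flips.

Lemma inv_connG (T : finType) (U : eqType) (e : rel T) (f : T -> U) :
  (forall a b, e a b -> f a = f b) -> forall x y, connect e x y -> f x = f y.
Proof.
move=> H x y /connectP [p Hp ->]; elim: p x Hp => //= z p IH x /andP [Hxz Hp].
by rewrite (H _ _ Hxz); exact: IH.
Qed.

Lemma del_edge_symm (N : finType) (t : rel N) u v : symmetric t -> symmetric (del_edge t u v).
Proof.
move=> ts a b; rewrite /del_edge ts; congr (_ && ~~ _).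
by rewrite orbC; congr (_ || _); rewrite andbC.
Qed.

Section TreeLemmas.
Variables (N : finType) (t : rel N).
Hypothesis Htree : is_tree t.

Let tsym : symmetric t. Proof. by case: Htree. Qed.
Let tirr : irreflexive t. Proof. by case: Htree => _ []. Qed.
Let tconn : forall a b, connect t a b. Proof. by case: Htree => _ [_ []]. Qed.
Let tbridge : forall u v, t u v -> ~~ connect (del_edge t u v) u v.
Proof. by case: Htree => _ [_ [_]]. Qed.

Definition tu (u : N) := [rel x y | [&& t x y, x != u & y != u]].
Definition side (u v : N) := [set a | connect (del_edge t u v) u a].

Lemma tu_symm u : symmetric (tu u).
Proof. by move=> x y /=; rewrite tsym; case: (x != u); case: (y != u); rewrite ?andbF ?andbT. Qed.

Lemma tu_del1 u w : subrel (tu u) (del_edge t w u).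
Proof.
move=> x y /and3P [Hxy Hx Hy]; rewrite /del_edge Hxy /=.
by rewrite (negPf Hx) (negPf Hy) !andbF.
Qed.

Lemma tu_del2 u w : subrel (tu u) (del_edge t u w).
Proof.
move=> x y /and3P [Hxy Hx Hy]; rewrite /del_edge Hxy /=.
by rewrite (negPf Hx) (negPf Hy) !andbF.
Qed.

Lemma conn_tu1 u w x y : connect (tu u) x y -> connect (del_edge t w u) x y.
Proof. by apply: connect_sub => a b /tu_del1 /connect1. Qed.
Lemma conn_tu2 u w x y : connect (tu u) x y -> connect (del_edge t u w) x y.
Proof. by apply: connect_sub => a b /tu_del2 /connect1. Qed.

Lemma G1 u a : a = u \/ exists2 c, t u c & connect (tu u) c a.
Proof.
case/connectP: (tconn u a) => p Hp ->.
case: (shortenP Hp) => [[|c p'] Hp' Hun _]; first by left.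
right; exists c; first by case/andP: Hp'.
move: Hp' Hun => /= /andP [_ Hp'] /andP [Hu _].
apply/connectP; exists p' => //.
apply: (sub_in_path (P := predC1 u)) Hp'.
  by move=> x y; rewrite !inE /= => Hx Hy Hxy; rewrite Hxy Hx Hy.
by apply/allP => z Hz /=; apply: contraNneq Hu => <-.
Qed.

Lemma side_tu c u a : t c u -> a \in side c u -> connect (tu u) c a.
Proof.
move=> Hcu; rewrite inE => /connectP [p Hp ->].
case: (shortenP Hp) => p' Hp' Hun Hsub.
have Hnu : u \notin c :: p'.
  rewrite inE negb_or; apply/andP; split.
    by apply/eqP => E; rewrite E tirr in Hcu.
  apply/negP => Hu; have Hu' : u \in c :: p' by rewrite inE Hu orbT.
  have := path_connect Hp' Hu'.
  by move=> Hc; move: (tbridge Hcu); rewrite Hc.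
apply/connectP; exists p' => //.
apply: (sub_in_path (P := predC1 u)) Hp'.
  by move=> x y; rewrite !inE /= => Hx Hy /andP [Hxy _]; rewrite Hxy Hx Hy.
by apply/allP => z Hz /=; apply: contraNneq Hnu => <-.
Qed.

Lemma side_split u v a : t u v -> a \in side u v -> a != u ->
  exists c, [/\ t u c, c != v & a \in side c u].
Proof.
move=> Huv Ha Hau.
case: (G1 u a) => [E|[c Huc Hca]]; first by rewrite E eqxx in Hau.
case: (eqVneq c v) => [E|Hcv].
  subst c; exfalso.
  have H1 : connect (del_edge t u v) u a by move: Ha; rewrite inE.
  have H2 : connect (del_edge t u v) a v.
    rewrite (sym_connect_sym (del_edge_symm u v tsym)); exact: conn_tu2 Hca.
  by move: (tbridge Huv); rewrite (connect_trans H1 H2).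
by exists c; split => //; rewrite inE; exact: conn_tu1.
Qed.

Lemma side_sub u v c : t u v -> t u c -> c != v -> side c u \subset side u v.
Proof.
move=> Huv Huc Hcv; apply/subsetP => a Ha.
have := side_tu (_ : t c u) Ha; rewrite tsym => /(_ Huc) Hca.
rewrite inE; apply: connect_trans (connect1 (_ : del_edge t u v u c)) (conn_tu2 _ Hca).
rewrite /del_edge Huc /= eqxx /= (negPf Hcv) /=.
by apply/negP => /andP [/eqP E _]; rewrite E tirr in Huv.
Qed.

Lemma side_notin c u : t c u -> u \notin side c u.
Proof. by move=> Hcu; rewrite inE; exact: tbridge. Qed.

Lemma side_self u v : u \in side u v.
Proof. by rewrite inE connect0. Qed.

Lemma side_disj u c c' a : t u c -> t u c' -> c != c' -> a \in side c u -> a \in side c' u -> False.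
Proof.
move=> Huc Huc' Hcc' Ha Ha'.
have Hcu : t c u by rewrite tsym.
have Hc'u : t c' u by rewrite tsym.
have H1 := side_tu Hcu Ha; have H2 := side_tu Hc'u Ha'.
have H3 : connect (tu u) c c'.
  apply: connect_trans H1 _; by rewrite (sym_connect_sym (@tu_symm u)).
have H4 : del_edge t c u c' u.
  rewrite /del_edge Hc'u /= (negPf (_ : c' != c)); last by rewrite eq_sym.
  by rewrite /=; apply/negP => /andP [/eqP E _]; rewrite E tirr in Hc'u.
by move: (tbridge Hcu); rewrite (connect_trans (conn_tu1 _ H3) (connect1 H4)).
Qed.

Lemma side_compl u v a : t u v -> a \notin side u v -> a \in side v u.
Proof.
move=> Huv Ha.
case: (G1 u a) => [E|[c Huc Hca]]; first by rewrite E side_self in Ha.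
case: (eqVneq c v) => [E|Hcv].
  by subst c; rewrite inE; exact: conn_tu1.
exfalso; move/negP: Ha; apply; apply: (subsetP (side_sub Huv Huc Hcv)).
by rewrite inE; exact: conn_tu1.
Qed.

Lemma leaf_side u v : t u v -> tdeg t u <= 1 -> side u v = [set u].
Proof.
move=> Huv Hd; apply/setP => a; rewrite inE.
case: (eqVneq a u) => [->|Hau]; first by rewrite side_self.
apply/negP => Ha.
have [c [Huc Hcv _]] := side_split Huv Ha Hau.
have : #|[set v; c]| <= tdeg t u.
  by apply: subset_leq_card; apply/subsetP => b; rewrite !inE => /orP [] /eqP ->.
by rewrite cards2 eq_sym Hcv; lia.
Qed.

End TreeLemmas.

Section Strat.
Variable G : sgraph.
Local Notation V := (vert G).
Local Notation E := (@adj G).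
Local Notation crk A := (mrk A (~: A)).
Variables (N : finType) (t : rel N) (L : V -> N) (r k : nat).
Hypothesis Htree : is_tree t.
Hypothesis Hdeg : forall a, tdeg t a <= 3.
Hypothesis Hinj : injective L.
Hypothesis Hleaf : forall a, tdeg t a <= 1 <-> exists x, L x = a.
Hypothesis Hcut : forall u v, t u v -> cut_rank [set x | connect (del_edge t u v) u (L x)] <= r.
Hypothesis Hk : 3 * 2 ^ r <= k.

Let tsym : symmetric t. Proof. by case: Htree. Qed.

Definition Sv u v := [set x | L x \in side t u v].

Lemma crkS u v : t u v -> crk (Sv u v) <= r.
Proof.
move=> Huv; have := Hcut Huv; rewrite cut_rankE.
have -> : [set x | connect (del_edge t u v) u (L x)] = Sv u v.
  by apply/setP => x; rewrite !inE.
done.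
Qed.

Lemma crkC (A : {set V}) : crk (~: A) = crk A.
Proof. by rewrite setCK mrk_sym. Qed.

Lemma key_inv (T : finType) (key : V -> T) (H : rel V) :
  (forall x y, H x y = [&& x != y, key x == key y & E x y]) ->
  forall x y, connect H x y -> key x = key y.
Proof.
move=> HH; apply: inv_connG => a b; rewrite HH => /and3P [_ /eqP -> _] //.
Qed.

Lemma F1 : forall n0 u v, t u v -> #|side t u v| <= n0 ->
  forall (H : rel V) w, (forall w', connect H w w' -> w' \in Sv u v) -> fwin k H w.
Proof.
elim=> [|n0 IH] u v Huv Hn H w Hc.
  have : 0 < #|side t u v| by apply/card_gt0P; exists u; exact: side_self.
  lia.
case: (leqP (tdeg t u) 1) => Hd.
  have [x Hx] := (Hleaf u).1 Hd.
  have HS : Sv u v = [set x].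
    rewrite /Sv (leaf_side Htree Huv Hd); apply/setP => y; rewrite !inE -Hx.
    by apply/eqP/eqP => [/Hinj|->].
  pose key := fun y : V => y == x.
  have Hb : forall c, crk (block key c) <= r.
    case.
      have -> : block key true = Sv u v by apply/setP => y; rewrite HS !inE /key; case: (y == x).
      exact: crkS.
    have -> : block key false = ~: Sv u v by apply/setP => y; rewrite HS !inE /key; case: (y == x).
    by rewrite crkC; exact: crkS.
  have [H' [Hf' HH']] := flip_blocks (Ks := [set: bool]) (m := 3) (fun y => in_setT (key y))
     (ltac:(by rewrite cardsT card_bool)) Hk Hb.
  apply: (fwin_intro Hf') => w' Hw'; left.
  have := Hc w' Hw'; rewrite HS inE => /eqP ->.
  move=> y; rewrite HH' /key eqxx.
  by case: (eqVneq y x) => [->|Hne]; rewrite ?eqxx //= (negPf Hne) andbF.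
have Hnl : forall y, L y != u.
  move=> y; apply/eqP => E0; have := (Hleaf u).2 (ex_intro _ y E0); lia.
pose P y c := [&& t u c, c != v & L y \in side t c u].
pose key y := [pick c | P y c].
have keyS : forall y c, (key y == Some c) = P y c.
  move=> y c; rewrite /key; case: pickP => [c' Hc'|Hn'].
    apply/eqP/idP => [[<-] //|Hcc].
    case: (eqVneq c' c) => [->//|Hne]; exfalso.
    move: Hc' Hcc => /and3P [H1' H2' H3'] /and3P [H1 H2 H3].
    exact: (side_disj Htree H1' H1 Hne H3' H3).
  by rewrite (Hn' c).
have keyN : forall y, (key y == None) = (y \notin Sv u v).
  move=> y; rewrite /key inE; case: pickP => [c Hc0|Hn'] /=.
    move: Hc0 => /and3P [H1 H2 H3]; apply/esym/negbF.
    by apply: (subsetP (side_sub Htree Huv H1 H2)).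
  apply/esym/negP => HS.
  have [c [H1 H2 H3]] := side_split Htree Huv HS (Hnl y).
  by have := Hn' c; rewrite /P H1 H2 H3.
set Ks := None |: [set Some c | c in [set c | t u c && (c != v)]].
have HKs : forall y, key y \in Ks.
  move=> y; case E0: (key y) => [c|]; last by rewrite !inE.
  have := keyS y c; rewrite E0 eqxx => /esym /and3P [H1 H2 _].
  by rewrite !inE; apply/orP; right; apply/imsetP; exists c; rewrite // inE H1 H2.
have HKc : #|Ks| <= 3.
  apply: leq_trans (leq_card_setU _ _) _; rewrite cards1.
  apply: leq_trans (_ : 1 + #|[set c | t u c && (c != v)]| <= _).
    by rewrite leq_add2l; apply: leq_imset_card.
  have Hv : v \in [set c | t u c] by rewrite inE.
  have := cardsD1 v [set c | t u c]; rewrite Hv.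
  have -> : #|[set c | t u c]| = tdeg t u by apply: eq_card => c; rewrite inE.
  have -> : [set c | t u c] :\ v = [set c | t u c && (c != v)].
    by apply/setP => c; rewrite !inE andbC.
  have := Hdeg u; lia.
have Hb : forall c0, crk (block key c0) <= r.
  case=> [c|].
    case Hcc: (t u c && (c != v)).
      have -> : block key (Some c) = Sv c u.
        by apply/setP => y; rewrite !inE keyS /P andbA Hcc inE.
      by apply: crkS; rewrite tsym; case/andP: Hcc.
    have -> : block key (Some c) = set0.
      by apply/setP => y; rewrite !inE keyS /P andbA Hcc.
    by apply: leq_trans (mrk_leR _ _) _; rewrite cards0.
  have -> : block key None = ~: Sv u v by apply/setP => y; rewrite inE keyN in_setC.
  by rewrite crkC; exact: crkS.
have [H' [Hf' HH']] := flip_blocks HKs HKc Hk Hb.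
apply: (fwin_intro Hf') => w' Hw'; right.
have Hw'S : L w' \in side t u v by have := Hc w' Hw'; rewrite inE.
have [c [Huc Hcv Hside]] := side_split Htree Huv Hw'S (Hnl w').
have Hcu : t c u by rewrite tsym.
apply: (IH c u Hcu).
  have Hlt : #|side t c u| < #|side t u v|.
    apply: proper_card; apply/properP; split; first exact: side_sub.
    by exists u; [exact: side_self | exact: side_notin].
  lia.
move=> w'' Hw''.
have Hk' : key w' == Some c by rewrite keyS /P Huc Hcv Hside.
have := key_inv HH' Hw''; move: Hk' => /eqP -> /esym /eqP.
by rewrite keyS inE => /and3P [_ _ ->].
Qed.

Lemma strat_wins : 2 <= #|V| -> flipper_wins G k.
Proof.
move=> V2.
have [x _] : exists x : V, x \in [set: V] by apply/set0Pn; rewrite -card_gt0 cardsT; lia.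
have [y Hy] : exists y, y \in [set: V] :\ x.
  apply/set0Pn; rewrite -card_gt0; have := cardsD1 x [set: V]; rewrite cardsT in_setT; lia.
have Hxy : L y != L x by apply/eqP => /Hinj E0; move: Hy; rewrite E0 !inE eqxx.
case: (G1 Htree (L x) (L y)) => [E0|[c Hc _]]; first by rewrite E0 eqxx in Hxy.
pose key := fun z : V => z \in Sv (L x) c.
have Hb : forall b, crk (block key b) <= r.
  case.
    have -> : block key true = Sv (L x) c by apply/setP => z; rewrite inE /key; case: (z \in Sv (L x) c).
    exact: crkS.
  have -> : block key false = ~: Sv (L x) c by apply/setP => z; rewrite inE in_setC /key; case: (z \in Sv (L x) c).
  by rewrite crkC; exact: crkS.
have [H' [Hf' HH']] := flip_blocks (Ks := [set: bool]) (m := 3) (fun y => in_setT (key y))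
   (ltac:(by rewrite cardsT card_bool)) Hk Hb.
move=> v0; apply: (fwin_intro Hf') => w' _; right.
case Hw: (key w').
  apply: (F1 Hc (leqnn _)) => w'' Hw''.
  by have := key_inv HH' Hw''; rewrite Hw /key => <-.
have Hcx : t c (L x) by rewrite tsym.
apply: (F1 Hcx (leqnn _)) => w'' Hw''.
have := key_inv HH' Hw''; rewrite Hw /key inE => /esym /negbT Hn.
by rewrite inE; apply: side_compl.
Qed.

End Strat.

Theorem upper_bound (G : sgraph) r : rw_le G r -> flipper_wins G (3 * 2 ^ r).
Proof.
move=> Hrw.
case: (leqP #|vert G| 1) => HV.
  have Heq : forall x y : vert G, x = y.
    move=> x y; apply/eqP; apply/negP => /negP Hne.
    have : #|[set x; y]| <= #|vert G|.
      by rewrite -cardsT; apply: subset_leq_card; apply: subsetT.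
    by rewrite cards2 Hne; lia.
  have Hk : 0 < 3 * 2 ^ r by rewrite muln_gt0 expn_gt0.
  move=> v0; apply: (@fwin_intro _ _ _ _ (fun x y => (x != y) && (adj x y (+) false))).
    by exists (fun _ => Ordinal Hk), (fun _ _ => false).
  by move=> w' _; left => y; rewrite (Heq w' y) eqxx.
case: Hrw => [H1|[N [t [L [Htr Hdeg Hinj Hleaf Hcut]]]]]; first lia.
exact: (strat_wins Htr Hdeg Hinj Hleaf Hcut (leqnn _)).
Qed.

Lemma min_ex (P : nat -> Prop) n : P n -> exists m, P m /\ forall k, P k -> m <= k.
Proof.
elim/ltn_ind: n => n IH Pn.
case: (classic (exists k, k < n /\ P k)) => [[k [Hk Pk]]|Hno].
  exact: IH Hk Pk.
exists n; split => // k Pk; rewrite leqNgt; apply/negP => Hk.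
by apply: Hno; exists k.
Qed.

Lemma fw_exists (G : sgraph) : flipper_wins G (#|vert G| * 2 ^ 1).
Proof.
have Hb : forall c : vert G, mrk (block id c) (~: block id c) <= 1.
  move=> c; apply: leq_trans (mrk_leR _ _) _.
  have -> : block id c = [set c] by apply/setP => x; rewrite !inE.
  by rewrite cards1.
have [H' [Hf' HH']] := flip_blocks (Ks := [set: vert G]) (m := #|vert G|) (k := #|vert G| * 2 ^ 1) (fun y => in_setT y)
   (ltac:(by rewrite cardsT)) (leqnn _) Hb.
move=> v0; apply: (fwin_intro Hf') => w' _; left => y.
by rewrite HH' /=; case: (eqVneq w' y).
Qed.

Lemma rw_exists (G : sgraph) : exists r, is_rw G r.
Proof.
have := lower_bound (fw_exists (G:=G)) => H.
have [m [Hm Hmin]] := min_ex H; exists m; split => //.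
Qed.

Lemma fw_exists' (G : sgraph) : exists f, is_fw G f.
Proof.
have [m [Hm Hmin]] := min_ex (fw_exists (G:=G)); exists m; split => //.
Qed.

Lemma is_rw_uniq G r1 r2 : is_rw G r1 -> is_rw G r2 -> r1 = r2.
Proof. by move=> [H1 M1] [H2 M2]; apply/eqP; rewrite eqn_leq M1 // M2. Qed.

Lemma is_fw_uniq G f1 f2 : is_fw G f1 -> is_fw G f2 -> f1 = f2.
Proof. by move=> [H1 M1] [H2 M2]; apply/eqP; rewrite eqn_leq M1 // M2. Qed.

Lemma part1 (G : sgraph) : exists r f : nat, [/\ is_rw G r, is_fw G f &
       r <= 3 * f + 1 <= 9 * 2 ^ r + 9].
Proof.
have [r Hr] := rw_exists G; have [f Hf] := fw_exists' G.
exists r, f; split => //.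
have H1 : r <= 3 * f + 1 by apply: Hr.2; apply: lower_bound; exact: Hf.1.
have H2 : f <= 3 * 2 ^ r by apply: Hf.2; apply: upper_bound; exact: Hr.1.
by rewrite H1 /=; lia.
Qed.

Theorem mainTheorem5 :
  (exists C : nat, forall G : sgraph,
     exists r f : nat, [/\ is_rw G r, is_fw G f &
       r <= 3 * f + 1 <= C * 2 ^ r + C]) /\
  (forall (I : Type) (F : I -> sgraph),
     (exists b : nat, forall i r, is_rw (F i) r -> r <= b) <->
     (exists b : nat, forall i f, is_fw (F i) f -> f <= b)).
Proof.
split; first by exists 9; exact: part1.
move=> I F; split.
  case=> b Hb; exists (9 * 2 ^ b + 9) => i f Hf.
  have [r' [f' [Hr' Hf' /andP [_ H2]]]] := part1 (F i).
  rewrite (is_fw_uniq Hf Hf').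
  have Hrb := Hb i r' Hr'.
  have : 2 ^ r' <= 2 ^ b by rewrite leq_exp2l.
  lia.
case=> b Hb; exists (3 * b + 1) => i r Hr.
have [r' [f' [Hr' Hf' /andP [H1 _]]]] := part1 (F i).
rewrite (is_rw_uniq Hr Hr').
have := Hb i f' Hf'; lia.
Qed.
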